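(* Let $n>d\ge 2$ be integers. For every connected graph $G$ with $n$ vertices and diameter $d$, $$\sigma_2(G)\le \binom{n-d}{2}d^2+2(n-d-1)d^2+d^3.$$
   Context: All graphs are finite, simple, undirected. For a connected graph $G$ and $u\in V(G)$, the eccentricity $\varepsilon_G(u)=\max_{v\in V(G)} d_G(u,v)$, where $d_G$ is the shortest-path distance; the diameter is $\max_u\varepsilon_G(u)$. The second Zagreb eccentricity index is $\sigma_2(G)=\sum_{uv\in E(G)}\varepsilon_G(u)\varepsilon_G(v)$. *)

(* Defs.v *)
From mathcomp Require Import all_boot.
Set Implicit Arguments. Unset Strict Implicit. Unset Printing Implicit Defensive.

(* A finite simple undirected graph: vertex type T : finType and an
   adjacency relation e that is symmetric and irreflexive. *)
Section Graph.
Variables (T : finType) (e : rel T).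

Definition walk_of_len (u v : T) (k : nat) : bool :=
  [exists p : k.-tuple T, path e u p && (last u p == v)].

(* shortest-path distance: the least k (< #|T|) such that a walk of length k
   from u to v exists. In a connected graph this is the usual distance,
   since d(u,v) <= #|T| - 1. *)
Definition gdist (u v : T) : nat := find (walk_of_len u v) (iota 0 #|T|).

Definition gconnected : Prop := forall u v : T, connect e u v.

Definition ecc (u : T) : nat := \max_(v : T) gdist u v.

Definition diam : nat := \max_(u : T) ecc u.

Definition edges : {set {set T}} :=
  [set A : {set T} | [exists u : T, exists v : T, e u v && (A == [set u; v])]].

Definition sigma2 : nat := \sum_(A in edges) \prod_(x in A) ecc x.
End Graph.

(* Main.v *)
Require Import Defs.
From mathcomp Require Import all_boot zify.

Lemma walkP (T : finType) (e : rel T) u v k :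
  reflect (exists s, [/\ size s = k, path e u s & last u s = v]) (walk_of_len e u v k).
Proof.
apply: (iffP existsP).
  by case=> t /andP [Hp /eqP Hl]; exists (val t); rewrite size_tuple.
case=> s [Hs Hp Hl].
have Hs' : size s == k by rewrite Hs.
by exists (Tuple Hs'); rewrite /= Hp Hl eqxx.
Qed.

Lemma gdist_walk (T : finType) (e : rel T) u v :
  gdist e u v < #|T| -> walk_of_len e u v (gdist e u v).
Proof.
rewrite /gdist => H.
have Hh : has (walk_of_len e u v) (iota 0 #|T|) by rewrite has_find size_iota.
have := nth_find 0 Hh; by rewrite nth_iota.
Qed.

Lemma gdist_min (T : finType) (e : rel T) u v k :
  k < gdist e u v -> ~~ walk_of_len e u v k.
Proof.
rewrite /gdist => H.
have Hk : k < #|T|.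
  apply: (leq_trans H); by rewrite -[X in _ <= X](size_iota 0) find_size.
have := before_find 0 H; by rewrite nth_iota // => ->.
Qed.

Lemma last_take_nth (T : Type) (p : seq T) u i :
  i <= size p -> last u (take i p) = nth u (u :: p) i.
Proof.
elim: p u i => [|x p IH] u [|i] //= Hi.
rewrite IH //; apply: set_nth_default => /=; lia.
Qed.

Lemma shortcut (T : finType) (e : rel T) u v (p : seq T) :
  path e u p -> last u p = v ->
  (forall k, k < size p -> ~~ walk_of_len e u v k) ->
  forall i j w, i <= j -> j <= size p ->
  path e (nth u (u :: p) i) w -> last (nth u (u :: p) i) w = nth u (u :: p) j ->
  j - i <= size w.
Proof.
move=> Hp Hl Hmin i j w Hij Hj Hw Hlw.
rewrite leqNgt; apply/negP => Hlt.
have Hi : i <= size p by lia.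
set s := take i p ++ w ++ drop j p.
have Hpi := Hp; rewrite -(cat_take_drop i p) cat_path in Hpi.
have Hpj := Hp; rewrite -(cat_take_drop j p) cat_path in Hpj.
move/andP: Hpi => [Hpi _]; move/andP: Hpj => [_ Hpj].
rewrite last_take_nth // in Hpj.
have Hlj : last (nth u (u :: p) j) (drop j p) = v.
  by rewrite -Hl -{3}(cat_take_drop j p) last_cat last_take_nth.
apply: (negP (Hmin (size s) _)).
  rewrite /s !size_cat size_takel // size_drop; lia.
apply/walkP; exists s; split => //.
  rewrite /s !cat_path Hpi /= last_take_nth // Hw /= Hlw //.
by rewrite /s !last_cat last_take_nth // Hlw.
Qed.

Lemma edge_card2 (T : finType) (e : rel T) A :
  irreflexive e -> A \in edges e -> #|A| = 2.
Proof.
move=> Hirr; rewrite inE => /existsP [a /existsP [b /andP [Hab /eqP ->]]].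
rewrite cards2; case: eqP => // Heq; by rewrite Heq Hirr in Hab.
Qed.

Lemma sigma2_le (T : finType) (e : rel T) d :
  irreflexive e -> (forall x, ecc e x <= d) -> sigma2 e <= #|edges e| * d ^ 2.
Proof.
move=> Hirr He; rewrite /sigma2 -sum_nat_const.
apply: leq_sum => A HA.
rewrite -(@edge_card2 _ e A Hirr HA) -prod_nat_const.
by apply: leq_prod.
Qed.

Lemma edges_bound (T : finType) (e : rel T) u v (p : seq T) :
  symmetric e -> irreflexive e -> path e u p -> last u p = v ->
  (forall k, k < size p -> ~~ walk_of_len e u v k) ->
  #|edges e| <= 'C(#|T| - (size p).+1, 2) + 3 * (#|T| - (size p).+1) + size p.
Proof.
move=> Hsym Hirr Hp Hl Hmin.
have Hsc := @shortcut _ e u v p Hp Hl Hmin.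
set d := size p in Hsc *.
set q := u :: p.
have Hsq : size q = d.+1 by [].
have Hneq : forall a b, e a b -> a != b.
  by move=> a b Hab; apply/eqP => Heq; rewrite Heq Hirr in Hab.
have Huq : uniq q.
  apply/(uniqP u) => i j; rewrite !inE => Hi Hj Heq.
  have Hgen : forall i j, i < j -> j < d.+1 -> nth u q i = nth u q j -> False.
    move=> i' j' Hij Hj' Heq'.
    have := Hsc i' j' [::] (ltnW Hij) Hj' erefl Heq'; rewrite /=; lia.
  case: (ltngtP i j) => // H.
    by case: (Hgen i j H Hj Heq).
  by case: (Hgen j i H Hi (esym Heq)).
set Q := [set x in q].
set R := ~: Q.
have HcQ : #|Q| = d.+1 by rewrite cardsE; apply/card_uniqP.
have HcR : #|R| = #|T| - d.+1 by rewrite cardsCs setCK HcQ.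
have HinQ : forall x, x \in Q -> exists2 i, i <= d & x = nth u q i.
  move=> x; rewrite inE => Hx; exists (index x q); last by rewrite nth_index.
  by rewrite -ltnS -Hsq index_mem.
have HQn : forall i, i <= d -> nth u q i \in Q.
  by move=> i Hi; rewrite inE mem_nth.
pose F := fun B : {set {x : T | x \in R}} => [set val x | x in B].
pose X1 := F @: [set B : {set {x : T | x \in R}} | #|B| == 2].
pose X2 := [set [set nth u q i; nth u q i.+1] | i : 'I_d].
pose f x := find (e x) q.
pose X3 := [set [set xj.1; nth u q (f xj.1 + val xj.2)] | xj in setX R [set: 'I_3]].
have Hc1 : #|X1| <= 'C(#|R|, 2).
  apply: (leq_trans (leq_imset_card _ _)).
  by rewrite card_draws card_sig cardsE.
have Hc2 : #|X2| <= d by apply: (leq_trans (leq_imset_card _ _)); rewrite card_ord.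
have Hc3 : #|X3| <= 3 * #|R|.
  apply: (leq_trans (leq_imset_card _ _)); rewrite cardsX cardsT card_ord; lia.
have Hmix : forall x y, x \in R -> y \in Q -> e x y -> [set x; y] \in X3.
  move=> x y HxR HyQ Hxy.
  have [i Hi Hyi] := HinQ y HyQ.
  have Hhas : has (e x) q by apply/hasP; exists y => //; by move: HyQ; rewrite inE.
  have Hfi : f x <= i.
    rewrite leqNgt; apply/negP => H.
    by have := before_find u H; rewrite -Hyi Hxy.
  have Hef := nth_find u Hhas.
  have Hfd : f x <= d by lia.
  have H2 : i - f x <= 2.
    have := Hsc (f x) i [:: x; y] Hfi Hi; rewrite /= Hsym Hef Hxy Hyi => H.
    by apply: H.
  have Hj : i - f x < 3 by lia.
  apply/imsetP; exists (x, Ordinal Hj); first by rewrite inE HxR inE.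
  by rewrite /= Hyi; congr [set _; nth _ _ _]; lia.
have Hcov : edges e \subset X1 :|: X2 :|: X3.
  apply/subsetP => A; rewrite inE => /existsP [a /existsP [b /andP [Hab /eqP ->]]].
  case Ha : (a \in Q); case Hb : (b \in Q).
  -
    have [i Hi Hai] := HinQ a Ha; have [j Hj Hbj] := HinQ b Hb.
    have Hgen : forall i j, i < j -> j <= d -> e (nth u q i) (nth u q j) ->
        [set nth u q i; nth u q j] \in X2.
      move=> i' j' Hij Hj' He'.
      have := Hsc i' j' [:: nth u q j'] (ltnW Hij) Hj'; rewrite /= He' => /(_ erefl erefl) H.
      have Hjd : i' < d by lia.
      apply/imsetP; exists (Ordinal Hjd) => //=.
      by have -> : j' = i'.+1 by lia.
    rewrite !inE; apply/orP; left; apply/orP; right.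
    case: (ltngtP i j) => H.
    - by rewrite Hai Hbj; apply: Hgen => //; rewrite -Hai -Hbj.
    - rewrite setUC Hai Hbj; apply: Hgen => //; by rewrite Hsym -Hai -Hbj.
    - by move: (Hneq _ _ Hab); rewrite Hai Hbj H eqxx.
  - rewrite setUC; apply/setUP; right; apply: Hmix => //.
      by rewrite inE Hb.
    by rewrite Hsym.
  - apply/setUP; right; apply: Hmix => //; by rewrite inE Ha.
  - apply/setUP; left; apply/setUP; left.
    have HaR : a \in R by rewrite inE Ha.
    have HbR : b \in R by rewrite inE Hb.
    apply/imsetP; exists [set (exist _ a HaR : {x : T | x \in R}); (exist _ b HbR : {x : T | x \in R})].
      have Hd : (exist _ a HaR : {x : T | x \in R}) != exist _ b HbR.
        apply/eqP => -[Heq].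
        by move: (Hneq _ _ Hab); rewrite Heq eqxx.
      by rewrite inE cards2 Hd.
    by rewrite /F imsetU1 imset_set1.
have := subset_leq_card Hcov.
have [H2 _] := leq_card_setU (X1 :|: X2) X3.
have [H1 _] := leq_card_setU X1 X2.
move=> H3.
rewrite -HcR.
apply: (leq_trans H3); apply: (leq_trans H2).
rewrite -addnA [3 * _ + _]addnC addnA leq_add //.
apply: (leq_trans H1); exact: leq_add.
Qed.

Theorem theorem2p11 (n d : nat) (T : finType) (e : rel T) :
  symmetric e -> irreflexive e -> gconnected e ->
  2 <= d -> d < n -> #|T| = n -> diam e = d ->
  sigma2 e <= 'C(n - d, 2) * d ^ 2 + 2 * (n - d - 1) * d ^ 2 + d ^ 3.
Proof.
move=> Hsym Hirr _ Hd2 Hdn HT Hdiam.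
have Hecc : forall x, ecc e x <= d by move=> x; rewrite -Hdiam; apply: leq_bigmax.
have HT0 : 0 < #|T| by lia.
have [u Hu] := eq_bigmax (ecc e) HT0.
have [v Hv] := eq_bigmax (gdist e u) HT0.
have Hguv : gdist e u v = d by rewrite -Hdiam /diam Hu /ecc Hv.
have : walk_of_len e u v (gdist e u v) by apply: gdist_walk; lia.
rewrite Hguv => /walkP [p [Hs Hp Hl]].
have Hmin : forall k, k < size p -> ~~ walk_of_len e u v k.
  by move=> k Hk; apply: gdist_min; rewrite Hguv -Hs.
have HE := @edges_bound _ e u v p Hsym Hirr Hp Hl Hmin.
have HS := @sigma2_le _ e d Hirr Hecc.
rewrite Hs HT in HE.
apply: (leq_trans HS).
have -> : n - d - 1 = n - d.+1 by lia.
have -> : n - d = (n - d.+1).+1 by lia.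
rewrite binS bin1.
move: HE; set r := n - d.+1; set c := 'C(r, 2) => HE.
have : #|edges e| * d ^ 2 <= (c + 3 * r + d) * d ^ 2 by apply: leq_mul.
move=> H; apply: (leq_trans H).
rewrite !expnS expn0; lia.
Qed.
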